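(* Let $\hat u_0:\mathbb{R}^n\to\mathbb{R}^m$ be such that its graph $M_0\subset\mathbb{R}^{n,m}$ is spacelike and $0\in M_0$. Then $$\lim_{R\to\infty}\inf_{x\in\mathbb{R}^n\setminus B_R}\big[|x|^2-\|\hat u_0(x)\|^2\big]=\infty,$$ equivalently $\lim_{R\to\infty}\inf_{M_0\setminus\mathcal{C}_R}|X|^2=\infty$. Moreover, there exists $\epsilon>0$ such that $\|\hat u_0\|\le\chi_\epsilon$, where $\chi_\epsilon(x)=1-\epsilon$ for $x\in\overline{B_1(0)}$ and $\chi_\epsilon(x)=|x|-\epsilon$ for $x\in\mathbb{R}^n\setminus B_1(0)$.
   Context: $\mathbb{R}^{n,m}=\mathbb{R}^n\times\mathbb{R}^m$ with quadratic form $|(x,y)|^2=|x|^2-\|y\|^2$ ($|x|,\|y\|$ Euclidean norms). The graph is spacelike if $\delta_{ij}-\sum_AD_i\hat u_0^AD_j\hat u_0^A$ is positive definite. $X$ is the position vector of $M_0$, $B_R\subset\mathbb{R}^n$ the Euclidean ball, and $\mathcal{C}_R=\{(x,y)\in\mathbb{R}^{n,m}:|x|^2<R^2\}$ the solid cylinder. *)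

(* Defs.v *)
From HB Require Import structures.
From mathcomp Require Import all_boot all_order all_algebra.
From mathcomp Require Import all_classical all_reals all_analysis.
Set Implicit Arguments. Unset Strict Implicit. Unset Printing Implicit Defensive.
Import Order.TTheory GRing.Theory Num.Theory.
Import numFieldNormedType.Exports.
Local Open Scope ring_scope.

(* Euclidean squared norm and Euclidean norm on R^k (the library's norm on
   'rV is the sup norm, so we define the Euclidean one explicitly). *)
Definition sqnormE {R : realType} {k : nat} (v : 'rV[R]_k) : R :=
  \sum_(i < k) v ord0 i ^+ 2.
Definition normE {R : realType} {k : nat} (v : 'rV[R]_k) : R :=
  Num.sqrt (sqnormE v).

Definition partial {R : realType} {n : nat} (f : 'rV[R]_n -> R) (i : 'I_n)
  (x : 'rV[R]_n) : R := 'D_(delta_mx ord0 i) f x.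

Definition induced_metric {R : realType} {n m : nat}
  (u : 'rV[R]_n -> 'rV[R]_m) (x : 'rV[R]_n) : 'M[R]_n :=
  \matrix_(i < n, j < n)
    ((i == j)%:R - \sum_(A < m) partial (fun y => u y ord0 A) i x
                               * partial (fun y => u y ord0 A) j x).

Definition pos_def {R : realType} {n : nat} (M : 'M[R]_n) : Prop :=
  forall v : 'rV[R]_n, v != 0 -> 0 < (v *m M *m v^T) ord0 ord0.

Definition spacelike_graph {R : realType} {n m : nat}
  (u : 'rV[R]_n -> 'rV[R]_m) : Prop :=
  forall x, pos_def (induced_metric u x).

Definition chi {R : realType} {n : nat} (eps : R) (x : 'rV[R]_n) : R :=
  if normE x <= 1 then 1 - eps else normE x - eps.

(* Main.v *)
Require Import Defs.
From HB Require Import structures.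
From mathcomp Require Import all_boot all_order all_algebra.
From mathcomp Require Import all_classical all_reals all_analysis.
From mathcomp Require Import ring lra.
Import Order.TTheory GRing.Theory Num.Theory.
Import numFieldNormedType.Exports.
Local Open Scope classical_set_scope.
Local Open Scope ring_scope.

Definition dotv {R : realType} {m : nat} (e w : 'rV[R]_m) : R :=
  \sum_(A < m) w ord0 A * e ord0 A.

Section Alg.
Variables (R : realType) (m : nat).
Implicit Types (a e v w : 'rV[R]_m) (t c : R).

Lemma sqnormE_ge0 v : 0 <= sqnormE v.
Proof. by apply: sumr_ge0 => i _; rewrite sqr_ge0. Qed.

Lemma normE_ge0 v : 0 <= normE v.
Proof. exact: sqrtr_ge0. Qed.

Lemma sqr_normE v : normE v ^+ 2 = sqnormE v.
Proof. by rewrite /normE sqr_sqrtr // sqnormE_ge0. Qed.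

Lemma sqnormEZ c v : sqnormE (c *: v) = c ^+ 2 * sqnormE v.
Proof.
rewrite /sqnormE mulr_sumr; apply: eq_bigr => i _; rewrite mxE; ring.
Qed.

Lemma normEZ c v : normE (c *: v) = `|c| * normE v.
Proof. by rewrite /normE sqnormEZ sqrtrM ?sqr_ge0 // sqrtr_sqr. Qed.

Lemma dotv_self v : dotv v v = sqnormE v.
Proof. by apply: eq_bigr => i _; rewrite expr2. Qed.

Lemma dotvD e v w : dotv e (v + w) = dotv e v + dotv e w.
Proof. rewrite /dotv -big_split; apply: eq_bigr => i _; rewrite mxE; exact: mulrDl. Qed.

Lemma dotvN e v : dotv e (- v) = - dotv e v.
Proof. rewrite /dotv -sumrN; apply: eq_bigr => i _; by rewrite mxE mulNr. Qed.

Lemma dotvZ e c v : dotv e (c *: v) = c * dotv e v.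
Proof. rewrite /dotv mulr_sumr; apply: eq_bigr => i _; rewrite mxE; ring. Qed.

Lemma sqnormE_sub a e t :
  sqnormE (a - t *: e) = sqnormE a - 2 * t * dotv e a + t ^+ 2 * sqnormE e.
Proof.
rewrite /sqnormE /dotv !mulr_sumr -sumrN -!big_split /=.
apply: eq_bigr => i _; rewrite !mxE; ring.
Qed.

Lemma CS e a : sqnormE e = 1 -> dotv e a <= normE a.
Proof.
move=> e1; have := sqnormE_ge0 (a - dotv e a *: e).
rewrite sqnormE_sub e1 mulr1 => h.
have h2 : dotv e a ^+ 2 <= sqnormE a by lra.
apply: (le_trans (ler_norm _)); rewrite -sqrtr_sqr /normE ler_sqrt //; exact: sqnormE_ge0.
Qed.

Lemma normE_gt0_sq v : 0 < sqnormE v -> 0 < normE v.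
Proof. by move=> h; rewrite /normE sqrtr_gt0. Qed.

End Alg.

Lemma dotv_Zl {R : realType} {m : nat} (c : R) (e w : 'rV[R]_m) :
  dotv (c *: e) w = c * dotv e w.
Proof. rewrite /dotv mulr_sumr; apply: eq_bigr => i _; rewrite mxE; ring. Qed.

Lemma sqnormE_eq0 {R : realType} {m : nat} (v : 'rV[R]_m) : sqnormE v = 0 -> v = 0.
Proof.
move=> h; apply/rowP => i; rewrite mxE.
have := @psumr_eq0P _ _ predT (fun j => v ord0 j ^+ 2) (fun j _ => sqr_ge0 (v ord0 j)) h i isT.
by move/eqP; rewrite sqrf_eq0 => /eqP.
Qed.

Lemma normE0 {R : realType} {m : nat} : normE (0 : 'rV[R]_m) = 0.
Proof. by rewrite /normE /sqnormE big1 ?sqrtr0 // => i _; rewrite mxE expr0n. Qed.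

Lemma normE_gt0 {R : realType} {m : nat} (w : 'rV[R]_m) : w != 0 -> 0 < normE w.
Proof.
move=> w0; rewrite /normE sqrtr_gt0 lt_def sqnormE_ge0 andbT.
by apply/eqP => /sqnormE_eq0 /eqP; rewrite (negbTE w0).
Qed.

Lemma unit_dir {R : realType} {m : nat} (w : 'rV[R]_m) : w != 0 ->
  sqnormE ((normE w)^-1 *: w) = 1 /\ dotv ((normE w)^-1 *: w) w = normE w.
Proof.
move=> w0; have hp := normE_gt0 w w0.
have hn : normE w != 0 by rewrite gt_eqF.
split; first by rewrite sqnormEZ -sqr_normE -exprMn mulVf // expr1n.
by rewrite dotv_Zl dotv_self -sqr_normE; field.
Qed.

Lemma coord_le {R : realType} {m : nat} (v : 'rV[R]_m) i : `|v ord0 i| <= normE v.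
Proof.
rewrite -sqrtr_sqr /normE ler_sqrt ?sqnormE_ge0 //.
rewrite /sqnormE (bigD1 i) //= lerDl; apply: sumr_ge0 => j _; exact: sqr_ge0.
Qed.

Lemma sqnormE_cont {R : realType} {m : nat} : continuous (@sqnormE R m).
Proof.
move=> x; apply: differentiable_continuous.
have -> : @sqnormE R m = \sum_(A < m) (fun w : 'rV[R]_m => w ord0 A * w ord0 A).
  by apply: funext => w; rewrite /sqnormE fct_sumE; apply: eq_bigr => i _; rewrite expr2.
apply: differentiable_sum => A.
have -> : (fun w : 'rV[R]_m => w ord0 A * w ord0 A) =
   ((fun w : 'rV[R]_m => w ord0 A) * (fun w : 'rV[R]_m => w ord0 A))%R by [].
apply: differentiableM; exact: differentiable_coord.
Qed.

Lemma normE_cont {R : realType} {m : nat} : continuous (@normE R m).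
Proof.
move=> x; apply: (@continuous_comp _ _ _ (@sqnormE R m) Num.sqrt).
  exact: sqnormE_cont.
exact: sqrt_continuous.
Qed.

Lemma dotv_linear {R : realType} {m : nat} (e : 'rV[R]_m) : linear (dotv e).
Proof.
move=> c v w; rewrite /dotv.
have -> : forall x : R, c *: x = c * x by [].
rewrite mulr_sumr -big_split; apply: eq_bigr => i _.
by rewrite !mxE /= mulrDl mulrA.
Qed.

HB.instance Definition _ (R : realType) m (e : 'rV[R]_m) := GRing.isLinear.Build R 'rV[R]_m R _ (@dotv R m e) (dotv_linear e).

Lemma dotv_cont {R : realType} {m : nat} (e : 'rV[R]_m) : continuous (dotv e).
Proof.
move=> x; apply: differentiable_continuous.
have -> : dotv e = \sum_(A < m) (fun w : 'rV[R]_m => w ord0 A * e ord0 A).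
  by apply: funext => w; rewrite /dotv fct_sumE.
apply: differentiable_sum => A.
have -> : (fun w : 'rV[R]_m => w ord0 A * e ord0 A) =
   ((fun w : 'rV[R]_m => w ord0 A) * cst (e ord0 A))%R by [].
apply: differentiableM; [exact: differentiable_coord | exact: differentiable_cst].
Qed.

Section Ana.
Variables (R : realType) (n m : nat) (u : 'rV[R]_n -> 'rV[R]_m).
Hypothesis du : forall x, differentiable u x.

Lemma dcomp_dotv e x : differentiable (dotv e \o u) x.
Proof.
apply: differentiable_comp => //; apply: linear_differentiable; exact: dotv_cont.
Qed.

Lemma D_dotv e x v : 'D_v (dotv e \o u) x = dotv e ('d u x v).
Proof.
rewrite deriveE; last exact: dcomp_dotv.
rewrite diff_comp //; last by apply: linear_differentiable; exact: dotv_cont.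
by rewrite /= (diff_lin _ (@dotv_cont R m e)).
Qed.

Lemma dotv_delta (A : 'I_m) (w : 'rV[R]_m) : dotv (delta_mx ord0 A) w = w ord0 A.
Proof.
rewrite /dotv (bigD1 A) //= mxE !eqxx mulr1 big1 ?addr0 // => B nBA.
by rewrite mxE eqxx (negbTE nBA) mulr0.
Qed.

Lemma partialE A i x :
  partial (fun y => u y ord0 A) i x = ('d u x (delta_mx ord0 i)) ord0 A.
Proof.
have -> : (fun y => u y ord0 A) = dotv (delta_mx ord0 A) \o u.
  by apply: funext => y; rewrite /= dotv_delta.
by rewrite /partial D_dotv dotv_delta.
Qed.

Lemma J_coord x v A :
  ('d u x v) ord0 A = \sum_i v ord0 i * ('d u x (delta_mx ord0 i)) ord0 A.
Proof.
rewrite {1}(row_sum_delta v) linear_sum summxE; apply: eq_bigr => i _.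
by rewrite linearZ mxE.
Qed.

Lemma metric_quad x v :
  (v *m induced_metric u x *m v^T) ord0 ord0 = sqnormE v - sqnormE ('d u x v).
Proof.
pose P A i := ('d u x (delta_mx ord0 i)) ord0 A.
transitivity (\sum_k \sum_i (v ord0 i * (i == k)%:R * v ord0 k)
   - \sum_k \sum_i (v ord0 i * v ord0 k * \sum_A P A i * P A k)).
  rewrite mxE -sumrB; apply: eq_bigr => k _; rewrite !mxE mulr_suml -sumrB.
  apply: eq_bigr => i _; rewrite !mxE; under eq_bigr => A _ do rewrite !partialE; rewrite /P; ring.
congr (_ - _).
  apply: eq_bigr => k _; rewrite (bigD1 k) //= eqxx big1 ?addr0; first by rewrite mulr1 expr2.
  by move=> i /negbTE ->; rewrite mulr0 mul0r.
rewrite /sqnormE.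
transitivity (\sum_A \sum_k \sum_i (v ord0 i * P A i * (v ord0 k * P A k))); last first.
  apply: eq_bigr => A _; rewrite J_coord expr2 mulr_sumr; apply: eq_bigr => k _.
  by rewrite mulr_suml.
rewrite [RHS]exchange_big /=; apply: eq_bigr => k _.
rewrite [RHS]exchange_big /=; apply: eq_bigr => i _.
rewrite mulr_sumr; apply: eq_bigr => A _; rewrite /P; ring.
Qed.

Lemma sp_ineq x v : pos_def (induced_metric u x) -> v != 0 ->
  sqnormE ('d u x v) < sqnormE v.
Proof. by move=> /(_ v) h /h; rewrite metric_quad subr_gt0. Qed.

Lemma line_derive (F : 'rV[R]_n -> R) a v t :
  derive (fun s : R => F (a + s *: v)) t 1 = derive F (a + t *: v) v /\
  (derivable (fun s : R => F (a + s *: v)) t 1 <-> derivable F (a + t *: v) v).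
Proof.
have E : (fun h : R => h^-1 *: (((fun s => F (a + s *: v)) \o shift t) (h *: 1)
            - F (a + t *: v))) =
         (fun h : R => h^-1 *: ((F \o shift (a + t *: v)) (h *: v) - F (a + t *: v))).
  apply: funext => h /=; congr (_ *: (F _ - _)).
  rewrite /shift /= [h *: 1]mulr1 scalerDl addrCA addrA.
  by congr (_ + _); rewrite addrC.
by rewrite /derive /derivable E.
Qed.

Lemma key a b e : spacelike_graph u -> sqnormE e = 1 -> a != b ->
  dotv e (u b - u a) < normE (b - a).
Proof.
move=> sp e1 ab; set v := b - a.
pose g := fun s : R => (dotv e \o u) (a + s *: v).
have hd : forall t : R, is_derive t (1 : R) g (dotv e ('d u (a + t *: v) v)).
  move=> t; have [E1 E2] := line_derive (dotv e \o u) a v t.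
  apply: DeriveDef; first by apply/E2; apply: diff_derivable; exact: dcomp_dotv.
  by rewrite /g E1 D_dotv.
have gc : {within `[0, 1], continuous g}.
  apply: continuous_subspaceT => t; have [dg _] := hd t.
  by apply: differentiable_continuous; apply/derivable1_diffP.
have [c _ hc] := MVT ltr01 (fun t _ => hd t) gc.
have g1 : g 1 = dotv e (u b) by rewrite /g /= scale1r addrC subrK.
have g0 : g 0 = dotv e (u a) by rewrite /g /= scale0r addr0.
have -> : dotv e (u b - u a) = dotv e ('d u (a + c *: v) v).
  by rewrite dotvD dotvN -g1 -g0 hc subr0 mulr1.
have v0 : v != 0 by rewrite /v subr_eq0 eq_sym.
have hs := sp_ineq _ _ (sp (a + c *: v)) v0.
apply: (le_lt_trans (@CS _ _ e _ e1)); rewrite /normE ltr_sqrt //.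
exact: le_lt_trans (@sqnormE_ge0 _ _ _) hs.
Qed.

End Ana.

Lemma ball_bounded (R : realType) (n : nat) :
  bounded_near (fun x : 'rV[R]_n => x) (globally [set x | normE x <= 1]).
Proof.
rewrite /bounded_near; near=> M => x Kx /=.
have M1 : 1 <= M by near: M; apply: nbhs_pinfty_ge; rewrite num_real.
rewrite [leLHS]/Num.norm /= mx_normrE; apply: bigmax_le => [|[i j] _ /=].
  exact: le_trans ler01 M1.
rewrite [i]ord1; apply: le_trans (coord_le x j) _; exact: le_trans Kx M1.
Unshelve. all: by end_near.
Qed.

Theorem lemma5p1 (R : realType) (n m : nat) (u : 'rV[R]_n -> 'rV[R]_m) :
  (forall x, differentiable u x) ->
  spacelike_graph u ->
  u 0 = 0 ->
  ((fun r : R => ereal_inf [set (sqnormE x - sqnormE (u x))%:E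
                           | x in [set x : 'rV[R]_n | r <= normE x]])
     @ +oo --> +oo%E)
  /\ (exists eps : R, 0 < eps /\ forall x, normE (u x) <= chi eps x).
Proof.
move=> du sp u0.
have strict : forall x, x != 0 -> normE (u x) < normE x.
  move=> x x0; have [ux0|ux0] := eqVneq (u x) 0.
    by rewrite ux0 normE0; exact: normE_gt0.
  have [e1 de] := unit_dir _ ux0.
  have := @key _ _ _ _ du (0 : 'rV[R]_n) x _ sp e1; rewrite u0 !subr0 de; apply.
  by rewrite eq_sym.
pose K := [set x : 'rV[R]_n | normE x <= 1].
have K0 : K !=set0 by exists 0; rewrite /K /= normE0 ler01.
have Kcl : closed K.
  exact: (proj1 (continuous_closedP _) (@normE_cont R n) _ (@closed_le R 1)).
have Kb := @ball_bounded R n.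
have Kc : compact K by exact: bounded_closed_compact.
have Kct : {within K, continuous (fun x => normE (u x))}.
  apply: continuous_subspaceT => x.
  apply: (@continuous_comp _ _ _ u normE); last exact: normE_cont.
  exact: differentiable_continuous.
have [c cK cmax] := EVT_max_rV K0 Kc Kct.
have Kc' : K c by rewrite inE in cK.
set M := normE (u c) in cmax.
have M1 : M < 1.
  rewrite /M; have [->|c0] := eqVneq c 0; first by rewrite u0 normE0 ltr01.
  exact: lt_le_trans (strict c c0) Kc'.
have M0 : 0 <= M by exact: normE_ge0.
have bnd1 : forall x, normE x <= 1 -> normE (u x) <= M.
  by move=> x hx; apply: cmax; rewrite inE.
have bnd2 : forall x, 1 < normE x -> normE (u x) <= normE x - (1 - M).
  move=> x hx; set r := normE x.
  have r0 : 0 < r by exact: lt_trans ltr01 hx.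
  set y := r^-1 *: x.
  have ny : normE y = 1 by rewrite /y normEZ gtr0_norm ?invr_gt0 // mulVf ?gt_eqF.
  have xy : x - y = (1 - r^-1) *: x by rewrite /y scalerBl scale1r.
  have nxy : normE (x - y) = r - 1.
    rewrite xy normEZ ger0_norm; last first.
      by rewrite subr_ge0 invf_le1 // ltW.
    by rewrite -/r mulrBl mul1r mulVf ?gt_eqF.
  have yx : y != x.
    apply/eqP => exy; move: nxy; rewrite exy subrr normE0 => /eqP.
    by rewrite eq_sym subr_eq0 gt_eqF.
  have [ux0|ux0] := eqVneq (u x) 0.
    rewrite ux0 normE0 /r; lra.
  have [e1 de] := unit_dir _ ux0.
  have k := @key _ _ _ _ du y x _ sp e1 yx.
  have cs := @CS _ _ _ (u y) e1.
  have uy : normE (u y) <= M by apply: bnd1; rewrite ny.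
  move: k; rewrite dotvD dotvN de nxy => k; lra.
have epos : 0 < 1 - M by rewrite subr_gt0.
split; last first.
  exists (1 - M); split => // x; rewrite /chi; case: ifP => hx.
    by rewrite opprB addrC subrK; exact: bnd1.
  by apply: bnd2; rewrite ltNge hx.
apply/cvgeyPge => A; near=> r.
have r1 : 1 <= r by near: r; apply: nbhs_pinfty_ge; rewrite num_real.
have rA : A / (1 - M) <= r by near: r; apply: nbhs_pinfty_ge; rewrite num_real.
move: rA; rewrite ler_pdivrMr // => rA.
apply: le_ereal_inf_tmp => _ [x /= hx <-]; rewrite lee_fin.
have sx : 1 <= normE x by exact: le_trans r1 hx.
have hb : normE (u x) <= normE x - (1 - M).
  have [h1|h1] := ltP 1 (normE x); first exact: bnd2.
  have e1 : normE x = 1 by apply/eqP; rewrite eq_le h1 sx.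
  rewrite e1 opprB addrC subrK; apply: bnd1; rewrite e1.
  exact: lexx.
rewrite -!sqr_normE.
have := @normE_ge0 _ _ (u x); have := @normE_ge0 _ _ x.
nra.
Unshelve. all: by end_near.
Qed.
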